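(* Let $Y^{(1)},Y^{(0)}$ be nonnegative random variables (potential outcomes) and $Z$ a random covariate vector. Let $$D(z)=\frac{\mathrm{E}(Y^{(1)}\mid Z=z)}{\mathrm{E}(Y^{(0)}\mid Z=z)}\quad\text{and}\quad AD(c)=\frac{\mathrm{E}(Y^{(1)}\mid D(Z)\ge c)}{\mathrm{E}(Y^{(0)}\mid D(Z)\ge c)}.$$ If all involved expectations are finite and $0<D(Z)<\infty$ for almost every $Z$, then $AD(c)$ is monotone increasing in $c$, and $AD(c)\ge c$ for any $c$. *)

(* Defs.v *)
From HB Require Import structures.
From mathcomp Require Import all_boot all_order all_algebra.
From mathcomp Require Import all_classical all_reals all_analysis.
Set Implicit Arguments. Unset Strict Implicit. Unset Printing Implicit Defensive.
Import Order.TTheory GRing.Theory Num.Theory.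
Local Open Scope classical_set_scope.
Local Open Scope ring_scope.

(* m is a version of the regression function z |-> E(Y | Z = z):
   m is measurable, m(Z) is integrable and for every measurable B,
   E[Y ; Z in B] = E[m(Z) ; Z in B]. *)
Definition is_cond_exp_given {d d' : measure_display} {T : measurableType d}
  {V : measurableType d'} {R : realType} (P : probability T R)
  (Y : T -> R) (Z : T -> V) (m : V -> R) : Prop :=
  [/\ measurable_fun setT m,
      P.-integrable setT (EFin \o (m \o Z)) &
      forall B : set V, measurable B ->
        (\int[P]_(w in Z @^-1` B) (Y w)%:E =
         \int[P]_(w in Z @^-1` B) (m (Z w))%:E)%E].

Definition condE_event {d : measure_display} {T : measurableType d}
  {R : realType} (P : probability T R) (Y : T -> R) (A : set T) : R :=
  fine (\int[P]_(w in A) (Y w)%:E) / fine (P A).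

Definition Dratio {V : Type} {R : realType} (m1 m0 : V -> R) (z : V) : R :=
  m1 z / m0 z.

Definition ADratio {d d' : measure_display} {T : measurableType d}
  {V : measurableType d'} {R : realType} (P : probability T R)
  (Y1 Y0 : T -> R) (Z : T -> V) (m1 m0 : V -> R) (c : R) : R :=
  condE_event P Y1 [set w | c <= Dratio m1 m0 (Z w)] /
  condE_event P Y0 [set w | c <= Dratio m1 m0 (Z w)].

(* Main.v *)
Require Import Defs.
From HB Require Import structures.
From mathcomp Require Import all_boot all_order all_algebra.
From mathcomp Require Import all_classical all_reals all_analysis.
From mathcomp Require Import lra.
Import Order.TTheory GRing.Theory Num.Theory.
Local Open Scope classical_set_scope.
Local Open Scope ring_scope.

Lemma mset {d'} {V : measurableType d'} {R : realType} (m1 m0 : V -> R) (c : R):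
  measurable_fun setT m1 -> measurable_fun setT m0 ->
  measurable [set z | c <= m1 z / m0 z].
Proof.
move=> h1 h0.
pose b z := [|| (m0 z == 0) && (c <= 0), (0 < m0 z) && (c * m0 z <= m1 z) |
   (m0 z < 0) && (m1 z <= c * m0 z)].
have -> : [set z | c <= m1 z / m0 z] = b @^-1` [set true].
  rewrite predeqE => z; rewrite /b /=.
  have [h|h|h] := ltgtP (m0 z) 0.
  - by rewrite ler_ndivlMr // (lt_eqF h) (lt_gtF h) h /=.
  - by rewrite ler_pdivlMr //= orbF.
  - by rewrite h invr0 mulr0 /= orbF.
have mc : measurable_fun setT (fun z : V => c * m0 z).
  exact: (measurable_realfun.measurable_funM (measurable_cst c) h0).
have mb : measurable_fun setT b.
  apply: measurable_or; [|apply: measurable_or]; apply: measurable_and.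
  - exact: (measurable_realfun.measurable_fun_eqr h0 (measurable_cst (0:R))).
  - exact: (measurable_realfun.measurable_fun_ler (measurable_cst c) (measurable_cst (0:R))).
  - exact: (measurable_realfun.measurable_fun_ltr (measurable_cst (0:R)) h0).
  - exact: (measurable_realfun.measurable_fun_ler mc h1).
  - exact: (measurable_realfun.measurable_fun_ltr h0 (measurable_cst (0:R))).
  - exact: (measurable_realfun.measurable_fun_ler h1 mc).
rewrite -[b @^-1` _]setTI; exact: mb.
Qed.

Lemma mlt {d'} {V : measurableType d'} {R : realType} (f g : V -> R) :
  measurable_fun setT f -> measurable_fun setT g ->
  measurable [set z | f z < g z].
Proof.
move=> mf mg; rewrite -[X in measurable X]setTI.
exact: (measurable_realfun.measurable_fun_ltr mf mg).
Qed.

Lemma ae_le_int d (T : measurableType d) (R : realType)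
  (mu : {measure set T -> \bar R}) (D : set T) (f g : T -> \bar R) :
  measurable D -> mu.-integrable D f -> mu.-integrable D g ->
  {ae mu, forall x, D x -> (f x <= g x)%E} ->
  (\int[mu]_(x in D) f x <= \int[mu]_(x in D) g x)%E.
Proof.
move=> mD fi gi [N [mN N0 sub]].
rewrite (negligible_integral mN mD fi N0) (negligible_integral mN mD gi N0).
have mDN : measurable (D `\` N) by exact: measurableD.
apply: le_integral => //.
- by apply: (integrableS mD mDN _ fi) => x [].
- by apply: (integrableS mD mDN _ gi) => x [].
move=> x /set_mem [Dx Nx].
case: (boolP (f x <= g x)%E) => // /negP nfg; exfalso; apply: Nx; apply: sub.
by move=> /(_ Dx).
Qed.

Lemma ae_ge0_int d (T : measurableType d) (R : realType)
  (mu : {measure set T -> \bar R}) (D : set T) (g : T -> \bar R) :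
  measurable D -> mu.-integrable D g ->
  {ae mu, forall x, D x -> (0 <= g x)%E} ->
  (0 <= \int[mu]_(x in D) g x)%E.
Proof.
move=> mD gi [N [mN N0 sub]].
rewrite (negligible_integral mN mD gi N0).
apply: integral_ge0 => x [Dx Nx].
case: (boolP (0 <= g x)%E) => // /negP nfg; exfalso; apply: Nx; apply: sub.
by move=> /(_ Dx).
Qed.

Lemma ratio_simpl (R : realType) (a b p : R) : p != 0 -> (a / p) / (b / p) = a / b.
Proof. by move=> hp; rewrite invf_div mulrA mulfVK. Qed.

Section main.
Context (d d' : measure_display) (T : measurableType d)
  (V : measurableType d') (R : realType) (P : probability T R)
  (Y1 Y0 : T -> R) (Z : T -> V) (m1 m0 : V -> R).
Hypotheses (mZ : measurable_fun setT Z) (Y0ge : forall w, 0 <= Y0 w)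
  (iY0 : P.-integrable setT (EFin \o Y0))
  (c1 : is_cond_exp_given P Y1 Z m1) (c0 : is_cond_exp_given P Y0 Z m0)
  (hae : {ae P, forall w, m0 (Z w) != 0 /\ 0 < Dratio m1 m0 (Z w)}).

Local Notation A c := [set w | (c <= Dratio m1 m0 (Z w))%R].

Lemma mA c : measurable (A c).
Proof.
case: c1 => mm1 _ _; case: c0 => mm0 _ _.
by have := mZ measurableT _ (mset _ _ c mm1 mm0); rewrite setTI.
Qed.

Lemma eq1 c : (\int[P]_(w in A c) (Y1 w)%:E = \int[P]_(w in A c) (m1 (Z w))%:E)%E.
Proof.
case: c1 => mm1 _ e; case: c0 => mm0 _ _; exact: e _ (mset _ _ c mm1 mm0).
Qed.

Lemma eq0 c : (\int[P]_(w in A c) (Y0 w)%:E = \int[P]_(w in A c) (m0 (Z w))%:E)%E.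
Proof.
case: c1 => mm1 _ _; case: c0 => mm0 _ e; exact: e _ (mset _ _ c mm1 mm0).
Qed.

Lemma int1 D : measurable D -> P.-integrable D (fun w => (m1 (Z w))%:E).
Proof. by case: c1 => _ i _ mD; exact: (integrableS measurableT mD (@subsetT _ _) i). Qed.

Lemma int0 D : measurable D -> P.-integrable D (fun w => (m0 (Z w))%:E).
Proof. by case: c0 => _ i _ mD; exact: (integrableS measurableT mD (@subsetT _ _) i). Qed.

Lemma nonneg0 : {ae P, forall w, 0 <= m0 (Z w)}.
Proof.
case: c0 => mm0 i0 e0.
pose B := [set z | m0 z < 0].
have mB : measurable B := @mlt _ _ _ m0 (fun=> 0) mm0 (measurable_cst (0:R)).
pose S := Z @^-1` B.
have mS : measurable S by have := mZ measurableT _ mB; rewrite setTI.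
have hS : (\int[P]_(w in S) (m0 (Z w))%:E =
    - \int[P]_(w in S) `|(m0 (Z w))%:E|)%E.
  rewrite -integral_ge0N; last by move=> *; exact: abse_ge0.
  apply: eq_integral => w /set_mem Sw.
  by rewrite lte0_abs ?lte_fin // oppeK.
have ge : (0 <= \int[P]_(w in S) (m0 (Z w))%:E)%E.
  by rewrite -(e0 _ mB); apply: integral_ge0 => w _; rewrite lee_fin.
have h0 : (\int[P]_(w in S) `|(m0 (Z w))%:E| = 0)%E.
  apply/eqP; rewrite eq_le integral_ge0 ?andbT; last by move=> *; exact: abse_ge0.
  by rewrite -oppe_ge0 -hS.
have mf := measurable_int P (int0 _ mS).
have := (ae_eq_integral_abs P mS mf).1 h0.
apply: filterS => w /= hw; rewrite leNgt; apply/negP => hneg.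
by have := hw hneg => -[] h; rewrite h ltxx in hneg.
Qed.

Lemma pos0 : {ae P, forall w, 0 < m0 (Z w)}.
Proof.
by apply: filterS2 nonneg0 hae => w h [h' _]; rewrite lt_neqAle eq_sym h' h.
Qed.

Lemma Epos c : (0 < P (A c))%E -> 0 < fine (\int[P]_(w in A c) (Y0 w)%:E).
Proof.
move=> PA.
have fin : (\int[P]_(w in A c) (Y0 w)%:E)%E \is a fin_num.
  apply: (integrable_fin_num (mA c)).
  exact: (integrableS measurableT (mA c) (@subsetT _ _) iY0).
have ge : (0 <= \int[P]_(w in A c) (Y0 w)%:E)%E.
  by apply: integral_ge0 => w _; rewrite lee_fin.
apply: fine_gt0; rewrite -(fineK fin) ltry andbT fineK //.
rewrite lt_neqAle ge andbT; apply/negP => /eqP I0.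
rewrite eq0 in I0.
have mf := measurable_int P (int0 _ (mA c)).
have habs : (\int[P]_(w in A c) `|(m0 (Z w))%:E| = 0)%E.
  rewrite (ae_eq_integral (fun w => (m0 (Z w))%:E)) //.
  - exact: mA.
  - exact: (measurable_int P) (integrable_abse (int0 _ (mA c))).
  - by apply: filterS pos0 => w hw _; rewrite gee0_abs // lee_fin ltW.
have hz := (ae_eq_integral_abs P (mA c) mf).1 habs.
have : {ae P, forall w, ~ A c w}.
  apply: filterS2 hz pos0 => w h1 h2 Aw.
  by have := h1 Aw => -[] h; rewrite h ltxx in h2.
case=> N [mN N0 sub].
have : P (A c) = 0%E.
  apply: (subset_measure0 (mA c) mN) => // w Aw; apply: sub => /=.
  by apply.
by move=> h; rewrite h ltxx in PA.
Qed.

Lemma intB c' c : P.-integrable (A c')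
  (fun w => ((m1 (Z w))%:E - (c * m0 (Z w))%:E)%E).
Proof.
have mD := mA c'.
apply: (integrableB mD (int1 _ mD)); exact: (integrableZl mD c (int0 _ mD)).
Qed.

Lemma intg c' c : (\int[P]_(w in A c') ((m1 (Z w))%:E - (c * m0 (Z w))%:E) =
  ((fine (\int[P]_(w in A c') (Y1 w)%:E)) -
    c * fine (\int[P]_(w in A c') (Y0 w)%:E))%:E)%E.
Proof.
have mD := mA c'.
have f1 := integrable_fin_num mD (int1 _ mD).
have f0 := integrable_fin_num mD (int0 _ mD).
rewrite (integralB_EFin mD (int1 _ mD)); last first.
  exact: (integrableZl mD c (int0 _ mD)).
rewrite (_ : (\int[P]_(w in A c') (c * m0 (Z w))%:E =
   c%:E * \int[P]_(w in A c') (m0 (Z w))%:E)%E); last first.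
  rewrite -(integralZl mD (int0 _ mD)); apply: eq_integral => w _.
  by rewrite EFinM.
by rewrite eq1 eq0 -{1}(fineK f1) -{1}(fineK f0) -EFinM -EFinB.
Qed.

Lemma key c : c * fine (\int[P]_(w in A c) (Y0 w)%:E) <=
  fine (\int[P]_(w in A c) (Y1 w)%:E).
Proof.
have := @ae_ge0_int _ _ _ P _ _ (mA c) (intB c c).
rewrite intg lee_fin subr_ge0; apply.
apply: filterS pos0 => w hw Aw.
rewrite /Dratio /= ler_pdivlMr // in Aw.
by rewrite -EFinB lee_fin subr_ge0.
Qed.

Lemma mono c1' c2 : c1' <= c2 ->
  fine (\int[P]_(w in A c1') (Y1 w)%:E) - c2 * fine (\int[P]_(w in A c1') (Y0 w)%:E)
  <= fine (\int[P]_(w in A c2) (Y1 w)%:E) - c2 * fine (\int[P]_(w in A c2) (Y0 w)%:E).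
Proof.
move=> h.
rewrite -lee_fin -!intg !(integral_mkcond (A _)).
apply: ae_le_int => //.
- by apply/(integrable_mkcond _ (mA c1')).1; exact: intB.
- by apply/(integrable_mkcond _ (mA c2)).1; exact: intB.
apply: filterS pos0 => w hw _; rewrite !patchE.
case: (boolP (w \in A c2)) => h2.
  have h1 : w \in A c1' by apply/mem_set; exact: le_trans h (set_mem h2).
  by rewrite h1.
case: ifP => _; last by [].
have lt : Dratio m1 m0 (Z w) < c2.
  by rewrite ltNge; apply/negP => hh; move/negP: h2; apply; exact: mem_set.
rewrite /Dratio ltr_pdivrMr // in lt.
by rewrite -EFinB lee_fin subr_le0 ltW.
Qed.

Lemma iY0A c : P.-integrable (A c) (EFin \o Y0).
Proof. exact: (integrableS measurableT (mA c) (@subsetT _ _) iY0). Qed.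

Lemma main_lemma :
  (forall c1' c2 : R, c1' <= c2 ->
     (0 < P [set w | (c2 <= Dratio m1 m0 (Z w))%R])%E ->
     ADratio P Y1 Y0 Z m1 m0 c1' <= ADratio P Y1 Y0 Z m1 m0 c2)
  /\ (forall c : R, (0 < P [set w | (c <= Dratio m1 m0 (Z w))%R])%E ->
     c <= ADratio P Y1 Y0 Z m1 m0 c).
Proof.
have pne c : (0 < P (A c))%E -> fine (P (A c)) != 0.
  move=> h; rewrite gt_eqF // fine_gt0 // h /=.
  exact: le_lt_trans (probability_le1 P (mA c)) (ltry 1).
split.
- move=> c1' c2 h P2.
  have P1 : (0 < P (A c1'))%E.
    apply: lt_le_trans P2 _; apply: le_measure; rewrite ?inE; [exact: mA|exact: mA|].
    move=> w /= hw; exact: le_trans h hw.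
  rewrite /ADratio /condE_event !ratio_simpl ?pne //.
  have b1 := Epos _ P1; have b2 := Epos _ P2; have k2 := key c2; have mo := mono _ _ h.
  have b12 : fine (\int[P]_(w in A c2) (Y0 w)%:E) <=
             fine (\int[P]_(w in A c1') (Y0 w)%:E).
    apply: fine_le; [exact: (integrable_fin_num (mA _) (iY0A _))|
                     exact: (integrable_fin_num (mA _) (iY0A _))|].
    apply: ge0_subset_integral; [exact: mA|exact: mA| |by move=> w _; rewrite lee_fin|].
      exact: (measurable_int P (iY0A c1')).
    move=> w /= hw; exact: le_trans h hw.
  rewrite ler_pdivrMr // mulrAC ler_pdivlMr //; nra.
- move=> c Pc; rewrite /ADratio /condE_event ratio_simpl ?pne //.
  rewrite ler_pdivlMr ?(Epos _ Pc) //; exact: key.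
Qed.

End main.

Theorem theorem2 (d d' : measure_display) (T : measurableType d)
  (V : measurableType d') (R : realType) (P : probability T R)
  (Y1 Y0 : T -> R) (Z : T -> V) (m1 m0 : V -> R) :
  measurable_fun setT Y1 -> measurable_fun setT Y0 -> measurable_fun setT Z ->
  (forall w, 0 <= Y1 w) -> (forall w, 0 <= Y0 w) ->
  P.-integrable setT (EFin \o Y1) -> P.-integrable setT (EFin \o Y0) ->
  is_cond_exp_given P Y1 Z m1 -> is_cond_exp_given P Y0 Z m0 ->
  {ae P, forall w, m0 (Z w) != 0 /\ 0 < Dratio m1 m0 (Z w)} ->
  (forall c1 c2 : R, c1 <= c2 ->
     (0 < P [set w | (c2 <= Dratio m1 m0 (Z w))%R])%E ->
     ADratio P Y1 Y0 Z m1 m0 c1 <= ADratio P Y1 Y0 Z m1 m0 c2)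
  /\
  (forall c : R, (0 < P [set w | (c <= Dratio m1 m0 (Z w))%R])%E ->
     c <= ADratio P Y1 Y0 Z m1 m0 c).
Proof.
move=> _ _ mZ _ Y0ge _ iY0 c1 c0 hae.
by apply: main_lemma.
Qed.
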